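(* Let $(G,\cdot)$ be a group satisfying the descending chain condition on subgroups and the ascending chain condition on normal subgroups (e.g. $G$ finite). Let $\epsilon\in\{1,-1\}$ and $\psi\in\operatorname{End}(G,\cdot)$ with either $\epsilon=-1$ and $\psi([[G,\psi],G])\le Z(G,\cdot)$, or $\epsilon=1$ and $\psi([\psi(G),G])\le Z(G,\cdot)$. Let $g\circ h=g\cdot\psi(g)^{\epsilon}\cdot h\cdot\psi(g)^{-\epsilon}$, let $\nu(g)\in\operatorname{Perm}(G)$ be $h\mapsto g\circ h$, and $N=\{\nu(g):g\in G\}$. Then there is a natural number $n$ such that: (1) $J=\ker(\psi^n)$ is a normal subgroup of both $(G,\cdot)$ and $(G,\circ)$; (2) $I=\psi^n(G)$ is a subgroup of both $(G,\cdot)$ and $(G,\circ)$; (3) $\psi$ restricts to a nilpotent endomorphism of $J$; (4) $\psi$ restricts to an automorphism of $I$; (5) both $(G,\cdot)$ and $(G,\circ)$ are semidirect products of $J$ by $I$; (6) $N$ is the semidirect product of its normal subgroup $\nu(J)$ by $\nu(I)$.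
   Context: $\operatorname{Perm}(G)$ is the group of permutations of the set $G$. For $\psi\in\operatorname{End}(G,\cdot)$, $[g,\psi]=g\cdot\psi(g)^{-1}$ and $[G,\psi]$ is the subgroup generated by these elements. Commutators are $[x,y]=xyx^{-1}y^{-1}$ and $[A,B]$ is the subgroup generated by $[a,b]$, $a\in A$, $b\in B$. $Z(G,\cdot)$ is the centre. $\psi^n$ is the $n$-fold composite of $\psi$; an endomorphism is nilpotent if some power of it is trivial. *)

(* Defs.v *)
From Stdlib Require Import Arith.
Set Implicit Arguments.

Definition is_group {T : Type} (mul : T -> T -> T) (inv : T -> T) (one : T) : Prop :=
  (forall x y z, mul (mul x y) z = mul x (mul y z)) /\
  (forall x, mul one x = x) /\ (forall x, mul x one = x) /\
  (forall x, mul (inv x) x = one) /\ (forall x, mul x (inv x) = one).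

Definition subset {T : Type} (A B : T -> Prop) : Prop := forall x, A x -> B x.
Definition setT {T : Type} : T -> Prop := fun _ => True.
Definition image {T U : Type} (f : T -> U) (A : T -> Prop) : U -> Prop :=
  fun y => exists x, A x /\ y = f x.

Definition subgroup {T : Type} (mul : T -> T -> T) (inv : T -> T) (one : T)
  (H : T -> Prop) : Prop :=
  H one /\ (forall x y, H x -> H y -> H (mul x y)) /\ (forall x, H x -> H (inv x)).

Definition normal_subgroup {T : Type} (mul : T -> T -> T) (inv : T -> T) (one : T)
  (H : T -> Prop) : Prop :=
  subgroup mul inv one H /\ (forall g h, H h -> H (mul (mul g h) (inv g))).

Definition gen {T : Type} (mul : T -> T -> T) (inv : T -> T) (one : T)
  (A : T -> Prop) : T -> Prop :=
  fun x => forall H, subgroup mul inv one H -> subset A H -> H x.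

Definition comm {T : Type} (mul : T -> T -> T) (inv : T -> T) (x y : T) : T :=
  mul (mul (mul x y) (inv x)) (inv y).

Definition commsub {T : Type} (mul : T -> T -> T) (inv : T -> T) (one : T)
  (A B : T -> Prop) : T -> Prop :=
  gen mul inv one (fun z => exists a b, A a /\ B b /\ z = comm mul inv a b).

(** [G, psi] = < g * psi(g)^-1 : g in G >. *)
Definition psicomm {T : Type} (mul : T -> T -> T) (inv : T -> T) (one : T)
  (psi : T -> T) : T -> Prop :=
  gen mul inv one (fun z => exists g, z = mul g (inv (psi g))).

Definition center {T : Type} (mul : T -> T -> T) : T -> Prop :=
  fun z => forall x, mul z x = mul x z.

Definition is_endo {T : Type} (mul : T -> T -> T) (psi : T -> T) : Prop :=
  forall x y, psi (mul x y) = mul (psi x) (psi y).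

Definition DCC_subgroups {T : Type} (mul : T -> T -> T) (inv : T -> T) (one : T) : Prop :=
  forall H : nat -> T -> Prop,
    (forall k, subgroup mul inv one (H k)) ->
    (forall k, subset (H (S k)) (H k)) ->
    exists m, forall k, m <= k -> subset (H m) (H k).

Definition ACC_normal {T : Type} (mul : T -> T -> T) (inv : T -> T) (one : T) : Prop :=
  forall H : nat -> T -> Prop,
    (forall k, normal_subgroup mul inv one (H k)) ->
    (forall k, subset (H k) (H (S k))) ->
    exists m, forall k, m <= k -> subset (H k) (H m).

Inductive sign := Pos | Neg.
Definition sopp (s : sign) : sign := match s with Pos => Neg | Neg => Pos end.
Definition spow {T : Type} (inv : T -> T) (s : sign) (x : T) : T :=
  match s with Pos => x | Neg => inv x end.

Definition circ {T : Type} (mul : T -> T -> T) (inv : T -> T) (psi : T -> T)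
  (eps : sign) (g h : T) : T :=
  mul (mul (mul g (spow inv eps (psi g))) h) (spow inv (sopp eps) (psi g)).

(** Used for (G, o) and
    for subgroups of Perm(G) (functions under composition). *)
Definition msubgroup {X : Type} (mul : X -> X -> X) (one : X) (H : X -> Prop) : Prop :=
  H one /\ (forall x y, H x -> H y -> H (mul x y)) /\
  (forall x, H x -> exists y, H y /\ mul x y = one /\ mul y x = one).

Definition mnormal_in {X : Type} (mul : X -> X -> X) (one : X) (S H : X -> Prop) : Prop :=
  forall s h s', S s -> H h -> S s' -> mul s s' = one -> mul s' s = one ->
    H (mul (mul s h) s').

Definition msemidirect {X : Type} (mul : X -> X -> X) (one : X) (S H K : X -> Prop) : Prop :=
  msubgroup mul one S /\ msubgroup mul one H /\ msubgroup mul one K /\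
  subset H S /\ subset K S /\ mnormal_in mul one S H /\
  (forall x, H x -> K x -> x = one) /\
  (forall s, S s -> exists h k, H h /\ K k /\ s = mul h k).

(* Main.v *)
Require Import Defs.
From Stdlib Require Import Arith Lia FunctionalExtensionality.


Lemma gA {T} {mul : T -> T -> T} {inv one} (Hg : is_group mul inv one) :
  forall x y z, mul (mul x y) z = mul x (mul y z).
Proof. apply Hg. Qed.
Lemma g1l {T} {mul : T -> T -> T} {inv one} (Hg : is_group mul inv one) :
  forall x, mul one x = x.
Proof. apply Hg. Qed.
Lemma g1r {T} {mul : T -> T -> T} {inv one} (Hg : is_group mul inv one) :
  forall x, mul x one = x.
Proof. apply Hg. Qed.
Lemma gVl {T} {mul : T -> T -> T} {inv one} (Hg : is_group mul inv one) :
  forall x, mul (inv x) x = one.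
Proof. apply Hg. Qed.
Lemma gVr {T} {mul : T -> T -> T} {inv one} (Hg : is_group mul inv one) :
  forall x, mul x (inv x) = one.
Proof. apply Hg. Qed.
Lemma gKV {T} {mul : T -> T -> T} {inv one} (Hg : is_group mul inv one) :
  forall x y, mul x (mul (inv x) y) = y.
Proof. intros. rewrite <- (gA Hg), (gVr Hg), (g1l Hg). reflexivity. Qed.
Lemma gVK {T} {mul : T -> T -> T} {inv one} (Hg : is_group mul inv one) :
  forall x y, mul (inv x) (mul x y) = y.
Proof. intros. rewrite <- (gA Hg), (gVl Hg), (g1l Hg). reflexivity. Qed.
Lemma gcan {T} {mul : T -> T -> T} {inv one} (Hg : is_group mul inv one) :
  forall a x y, mul a x = mul a y -> x = y.
Proof. intros a x y H. rewrite <- (gVK Hg a x), H, (gVK Hg). reflexivity. Qed.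
Lemma guniq {T} {mul : T -> T -> T} {inv one} (Hg : is_group mul inv one) :
  forall x y, mul x y = one -> y = inv x.
Proof. intros x y H. apply (gcan Hg x). rewrite H, (gVr Hg). reflexivity. Qed.
Lemma ginvM {T} {mul : T -> T -> T} {inv one} (Hg : is_group mul inv one) :
  forall x y, inv (mul x y) = mul (inv y) (inv x).
Proof. intros x y. symmetry. apply (guniq Hg).
  rewrite (gA Hg), <- (gA Hg y), (gVr Hg), (g1l Hg), (gVr Hg). reflexivity. Qed.
Lemma ginvK {T} {mul : T -> T -> T} {inv one} (Hg : is_group mul inv one) :
  forall x, inv (inv x) = x.
Proof. intros x. symmetry. apply (guniq Hg). apply (gVl Hg). Qed.
Lemma ginv1 {T} {mul : T -> T -> T} {inv one} (Hg : is_group mul inv one) :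
  inv one = one.
Proof. symmetry. apply (guniq Hg). apply (g1l Hg). Qed.

Ltac gnorm Hg :=
  repeat first [ rewrite (gA Hg) | rewrite (ginvM Hg) | rewrite (ginvK Hg)
               | rewrite (ginv1 Hg) | rewrite (gKV Hg) | rewrite (gVK Hg)
               | rewrite (gVr Hg) | rewrite (gVl Hg) | rewrite (g1l Hg)
               | rewrite (g1r Hg) ].

Lemma endo1 {T} {mul : T -> T -> T} {inv one} (Hg : is_group mul inv one) psi :
  is_endo mul psi -> psi one = one.
Proof. intros He. apply (gcan Hg (psi one)). rewrite <- He, !(g1r Hg). reflexivity. Qed.
Lemma endoV {T} {mul : T -> T -> T} {inv one} (Hg : is_group mul inv one) psi :
  is_endo mul psi -> forall x, psi (inv x) = inv (psi x).
Proof. intros He x. apply (guniq Hg). rewrite <- He, (gVr Hg). apply (endo1 Hg psi He). Qed.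
Lemma iter_endo {T} {mul : T -> T -> T} psi :
  is_endo mul psi -> forall k, is_endo mul (Nat.iter k psi).
Proof. intros He k. induction k; intros x y; simpl. reflexivity. rewrite IHk. apply He. Qed.

Ltac gnormP Hg He :=
  repeat first [ rewrite He | rewrite (endoV Hg _ He) | rewrite (endo1 Hg _ He)
               | rewrite (gA Hg) | rewrite (ginvM Hg) | rewrite (ginvK Hg)
               | rewrite (ginv1 Hg) | rewrite (gKV Hg) | rewrite (gVK Hg)
               | rewrite (gVr Hg) | rewrite (gVl Hg) | rewrite (g1l Hg)
               | rewrite (g1r Hg) ].

Definition aa {T} (inv : T -> T) (psi : T -> T) eps g := spow inv eps (psi g).

Lemma circE {T} {mul : T -> T -> T} {inv one} (Hg : is_group mul inv one) psi eps :
  forall g h, circ mul inv psi eps g h = mul g (mul (aa inv psi eps g) (mul h (inv (aa inv psi eps g)))).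
Proof. intros g h. unfold circ, aa. destruct eps; simpl; gnorm Hg; reflexivity. Qed.

Lemma gen_base {T} (mul : T -> T -> T) inv one (A : T -> Prop) x :
  A x -> gen mul inv one A x.
Proof. intros Ax H HH Hs. apply Hs, Ax. Qed.
Lemma gen_inv {T} (mul : T -> T -> T) inv one (A : T -> Prop) x :
  A x -> gen mul inv one A (inv x).
Proof. intros Ax H HH Hs. apply HH, Hs, Ax. Qed.

Lemma center_swap {T} {mul : T -> T -> T} {inv one} (Hg : is_group mul inv one) z :
  center mul z -> forall k r, mul z (mul k r) = mul k (mul z r).
Proof. intros Hz k r. rewrite <- (gA Hg), Hz, (gA Hg). reflexivity. Qed.

Lemma key {T} {mul : T -> T -> T} {inv one} (Hg : is_group mul inv one) psi eps
  (He : is_endo mul psi)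
  (Hc : (eps = Neg /\
    subset (image psi (commsub mul inv one (psicomm mul inv one psi) setT))
           (center mul)) \/
   (eps = Pos /\
    subset (image psi (commsub mul inv one (image psi setT) setT))
           (center mul))) :
  forall g h, exists z, center mul z /\
    aa inv psi eps (circ mul inv psi eps g h) =
    mul (aa inv psi eps g) (mul (aa inv psi eps h) z).
Proof.
  intros g h. destruct Hc as [[-> Hc]|[-> Hc]].
  - set (u := mul g (inv (psi g))).
    exists (psi (inv (comm mul inv u h))). split.
    + apply Hc. eexists; split; [|reflexivity].
      apply gen_inv. exists u, h. split; [|split; [exact I|reflexivity]].
      apply gen_base. exists g. reflexivity.
    + unfold aa, circ, comm, u; simpl. gnormP Hg He. reflexivity.
  - exists (psi (inv (comm mul inv (psi g) (inv h)))). split.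
    + apply Hc. eexists; split; [|reflexivity].
      apply gen_inv. exists (psi g), (inv h). split; [|split; [exact I|reflexivity]].
      exists g. split; [exact I|reflexivity].
    + unfold aa, circ, comm; simpl. gnormP Hg He. reflexivity.
Qed.



Lemma circ_assoc {T} {mul : T -> T -> T} {inv one} (Hg : is_group mul inv one) psi eps
  (Hk : forall g h, exists z, center mul z /\
    aa inv psi eps (circ mul inv psi eps g h) =
    mul (aa inv psi eps g) (mul (aa inv psi eps h) z)) :
  forall g h k, circ mul inv psi eps (circ mul inv psi eps g h) k =
                circ mul inv psi eps g (circ mul inv psi eps h k).
Proof.
  intros g h k. rewrite (circE Hg psi eps (circ mul inv psi eps g h) k).
  destruct (Hk g h) as [z [Hz Ha]]. rewrite Ha.
  rewrite !(circE Hg psi eps). gnorm Hg.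
  rewrite (center_swap Hg z Hz). gnorm Hg. reflexivity.
Qed.

Lemma circ1r {T} {mul : T -> T -> T} {inv one} (Hg : is_group mul inv one) psi eps :
  forall g, circ mul inv psi eps g one = g.
Proof. intros g. rewrite (circE Hg). gnorm Hg. reflexivity. Qed.

Lemma aa1 {T} {mul : T -> T -> T} {inv one} (Hg : is_group mul inv one) psi eps :
  is_endo mul psi -> aa inv psi eps one = one.
Proof. intros He. unfold aa. rewrite (endo1 Hg _ He). destruct eps; simpl; gnorm Hg; reflexivity. Qed.

Lemma circ1l {T} {mul : T -> T -> T} {inv one} (Hg : is_group mul inv one) psi eps :
  is_endo mul psi -> forall g, circ mul inv psi eps one g = g.
Proof. intros He g. rewrite (circE Hg), (aa1 Hg _ _ He). gnorm Hg. reflexivity. Qed.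

Definition bar {T} (mul : T -> T -> T) inv psi eps x :=
  mul (inv (aa inv psi eps x)) (mul (inv x) (aa inv psi eps x)).

Lemma circ_bar_r {T} {mul : T -> T -> T} {inv one} (Hg : is_group mul inv one) psi eps :
  forall x, circ mul inv psi eps x (bar mul inv psi eps x) = one.
Proof. intros x. rewrite (circE Hg). unfold bar. gnorm Hg. reflexivity. Qed.

Lemma circ_bar_l {T} {mul : T -> T -> T} {inv one} (Hg : is_group mul inv one) psi eps
  (He : is_endo mul psi)
  (Hk : forall g h, exists z, center mul z /\
    aa inv psi eps (circ mul inv psi eps g h) =
    mul (aa inv psi eps g) (mul (aa inv psi eps h) z)) :
  forall x, circ mul inv psi eps (bar mul inv psi eps x) x = one.
Proof.
  intros x. set (o := circ mul inv psi eps). set (y := bar mul inv psi eps x).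
  assert (E : x = bar mul inv psi eps y).
  { rewrite <- (circ1r Hg psi eps x). fold o.
    rewrite <- (circ_bar_r Hg psi eps y). fold o.
    unfold o. rewrite <- (circ_assoc Hg psi eps Hk).
    unfold y. rewrite (circ_bar_r Hg psi eps x). apply (circ1l Hg _ _ He). }
  transitivity (o y (bar mul inv psi eps y)); [f_equal; exact E| apply circ_bar_r; exact Hg].
Qed.

Lemma psi_aa {T} {mul : T -> T -> T} {inv one} (Hg : is_group mul inv one) psi eps :
  is_endo mul psi -> forall x, psi (aa inv psi eps x) = aa inv psi eps (psi x).
Proof. intros He x. unfold aa. destruct eps; simpl; [reflexivity|]. apply (endoV Hg _ He). Qed.

Lemma psi_circ {T} {mul : T -> T -> T} {inv one} (Hg : is_group mul inv one) psi eps :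
  is_endo mul psi -> forall x y, psi (circ mul inv psi eps x y) = circ mul inv psi eps (psi x) (psi y).
Proof. intros He x y. rewrite !(circE Hg), !He, (endoV Hg _ He), (psi_aa Hg _ _ He). reflexivity. Qed.

Lemma psi_bar {T} {mul : T -> T -> T} {inv one} (Hg : is_group mul inv one) psi eps :
  is_endo mul psi -> forall x, psi (bar mul inv psi eps x) = bar mul inv psi eps (psi x).
Proof. intros He x. unfold bar. rewrite !He, !(endoV Hg _ He), (psi_aa Hg _ _ He). reflexivity. Qed.

Lemma iter_circ {T} {mul : T -> T -> T} {inv one} (Hg : is_group mul inv one) psi eps :
  is_endo mul psi -> forall k x y, Nat.iter k psi (circ mul inv psi eps x y) =
     circ mul inv psi eps (Nat.iter k psi x) (Nat.iter k psi y).
Proof. intros He k; induction k; intros x y; simpl. reflexivity. rewrite IHk. apply (psi_circ Hg _ _ He). Qed.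

Lemma iter_bar {T} {mul : T -> T -> T} {inv one} (Hg : is_group mul inv one) psi eps :
  is_endo mul psi -> forall k x, Nat.iter k psi (bar mul inv psi eps x) =
     bar mul inv psi eps (Nat.iter k psi x).
Proof. intros He k; induction k; intros x; simpl. reflexivity. rewrite IHk. apply (psi_bar Hg _ _ He). Qed.

Lemma bar1 {T} {mul : T -> T -> T} {inv one} (Hg : is_group mul inv one) psi eps :
  is_endo mul psi -> bar mul inv psi eps one = one.
Proof. intros He. unfold bar. rewrite (aa1 Hg _ _ He). gnorm Hg. reflexivity. Qed.

Lemma iter1 {T} {mul : T -> T -> T} {inv one} (Hg : is_group mul inv one) psi :
  is_endo mul psi -> forall k, Nat.iter k psi one = one.
Proof. intros He k. apply (endo1 Hg), iter_endo, He. Qed.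
Lemma iterV {T} {mul : T -> T -> T} {inv one} (Hg : is_group mul inv one) psi :
  is_endo mul psi -> forall k x, Nat.iter k psi (inv x) = inv (Nat.iter k psi x).
Proof. intros He k. apply (endoV Hg), iter_endo, He. Qed.

Theorem mainTheorem5 (T : Type) (mul : T -> T -> T) (inv : T -> T) (one : T)
  (psi : T -> T) (eps : sign) :
  is_group mul inv one ->
  DCC_subgroups mul inv one ->
  ACC_normal mul inv one ->
  is_endo mul psi ->
  ((eps = Neg /\
    subset (image psi (commsub mul inv one (psicomm mul inv one psi) setT))
           (center mul)) \/
   (eps = Pos /\
    subset (image psi (commsub mul inv one (image psi setT) setT))
           (center mul))) ->
  exists n : nat,
    let J : T -> Prop := fun g => Nat.iter n psi g = one in
    let I : T -> Prop := image (Nat.iter n psi) setT in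
    let o := circ mul inv psi eps in
    let nu : T -> (T -> T) := fun g => fun h => o g h in
    let N : (T -> T) -> Prop := image nu setT in
    (* (1) *)
    (normal_subgroup mul inv one J /\
     msubgroup o one J /\ mnormal_in o one setT J) /\
    (* (2) *)
    (subgroup mul inv one I /\ msubgroup o one I) /\
    (* (3) *)
    (subset (image psi J) J /\
     exists m : nat, forall x, J x -> Nat.iter m psi x = one) /\
    (* (4) *)
    (subset (image psi I) I /\
     (forall x y, I x -> I y -> psi x = psi y -> x = y) /\
     subset I (image psi I)) /\
    (* (5) *)
    (msemidirect mul one setT J I /\ msemidirect o one setT J I) /\
    (* (6) *)
    msemidirect (fun f g : T -> T => fun x => f (g x)) (fun x : T => x)
      N (image nu J) (image nu I).
Proof.
  intros Hg Hdcc Hacc He Hc.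
  pose proof (key Hg psi eps He Hc) as Hk.
  destruct (Hdcc (fun k => image (Nat.iter k psi) setT)) as [m1 Hm1].
  { intros k. split; [|split].
    - exists one. split; [exact Logic.I|]. symmetry. apply (iter1 Hg _ He).
    - intros x y [a [_ ->]] [b [_ ->]]. exists (mul a b). split; [exact Logic.I|].
      symmetry. apply (iter_endo _ He).
    - intros x [a [_ ->]]. exists (inv a). split; [exact Logic.I|]. symmetry. apply (iterV Hg _ He). }
  { intros k x [a [_ ->]]. exists (psi a). split; [exact Logic.I|]. apply Nat.iter_succ_r. }
  destruct (Hacc (fun k x => Nat.iter k psi x = one)) as [m2 Hm2].
  { intros k. split; [split; [|split]|].
    - apply (iter1 Hg _ He).
    - intros x y Hx Hy. rewrite (iter_endo _ He), Hx, Hy. apply (g1l Hg).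
    - intros x Hx. rewrite (iterV Hg _ He), Hx. apply (ginv1 Hg).
    - intros g h Hh. rewrite !(iter_endo _ He), (iterV Hg _ He), Hh, (g1r Hg). apply (gVr Hg). }
  { intros k x Hx. simpl. rewrite Hx. apply (endo1 Hg _ He). }
  set (n := m1 + m2).
  assert (FI : forall k x, n <= k -> image (Nat.iter n psi) setT x ->
                 exists y, x = Nat.iter k psi y).
  { intros k x Hk' [y [_ ->]]. unfold n. rewrite Nat.iter_add.
    destruct (Hm1 k ltac:(unfold n in Hk'; lia) (Nat.iter m1 psi (Nat.iter m2 psi y)))
      as [z [_ Hz]].
    { exists (Nat.iter m2 psi y). split; [exact Logic.I|reflexivity]. }
    exists z. exact Hz. }
  assert (FJ : forall k y, n <= k -> Nat.iter k psi y = one -> Nat.iter n psi y = one).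
  { intros k y Hk' Hy. unfold n. rewrite Nat.iter_add.
    rewrite (Hm2 k ltac:(unfold n in Hk'; lia) y Hy). apply (iter1 Hg _ He). }
  exists n. intros J I o nu N.
  assert (TI : forall x, J x -> I x -> x = one).
  { intros x Hx [y [_ Hy]]. unfold J in Hx. subst x. apply (FJ (n + n)); [lia|].
    rewrite Nat.iter_add. exact Hx. }
  assert (HJsub : subgroup mul inv one J).
  { split; [|split]; unfold J.
    - apply (iter1 Hg _ He).
    - intros x y Hx Hy. rewrite (iter_endo _ He), Hx, Hy. apply (g1l Hg).
    - intros x Hx. rewrite (iterV Hg _ He), Hx. apply (ginv1 Hg). }
  assert (HJnorm : forall g h, J h -> J (mul (mul g h) (inv g))).
  { unfold J. intros g h Hh. rewrite !(iter_endo _ He), (iterV Hg _ He), Hh, (g1r Hg). apply (gVr Hg). }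
  assert (HIsub : subgroup mul inv one I).
  { split; [|split].
    - exists one. split; [exact Logic.I|]. symmetry. apply (iter1 Hg _ He).
    - intros x y [a [_ ->]] [b [_ ->]]. exists (mul a b). split; [exact Logic.I|].
      symmetry. apply (iter_endo _ He).
    - intros x [a [_ ->]]. exists (inv a). split; [exact Logic.I|]. symmetry. apply (iterV Hg _ He). }
  assert (Hbr : forall x, o x (bar mul inv psi eps x) = one) by apply (circ_bar_r Hg).
  assert (Hbl : forall x, o (bar mul inv psi eps x) x = one) by apply (circ_bar_l Hg _ _ He Hk).
  assert (Hoa : forall x y z, o (o x y) z = o x (o y z)) by apply (circ_assoc Hg _ _ Hk).
  assert (Ho1l : forall x, o one x = x) by apply (circ1l Hg _ _ He).
  assert (Ho1r : forall x, o x one = x) by apply (circ1r Hg).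
  assert (HPo : forall x y, Nat.iter n psi (o x y) = o (Nat.iter n psi x) (Nat.iter n psi y))
    by apply (iter_circ Hg _ _ He).
  assert (HPb : forall x, Nat.iter n psi (bar mul inv psi eps x) = bar mul inv psi eps (Nat.iter n psi x))
    by apply (iter_bar Hg _ _ He).
  assert (HP1 : Nat.iter n psi one = one) by apply (iter1 Hg _ He).
  assert (Hb1 : bar mul inv psi eps one = one) by apply (bar1 Hg _ _ He).
  assert (HJo : msubgroup o one J).
  { split; [|split]; unfold J.
    - exact HP1.
    - intros x y Hx Hy. rewrite HPo, Hx, Hy. apply Ho1l.
    - intros x Hx. exists (bar mul inv psi eps x). rewrite HPb, Hx. auto. }
  assert (HIo : msubgroup o one I).
  { split; [|split].
    - exists one. split; [exact Logic.I|]. auto.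
    - intros x y [a [_ ->]] [b [_ ->]]. exists (o a b). split; [exact Logic.I|]. auto.
    - intros x [a [_ ->]]. exists (Nat.iter n psi (bar mul inv psi eps a)).
      split; [exists (bar mul inv psi eps a); split; [exact Logic.I|reflexivity]|].
      rewrite <- !HPo, Hbr, Hbl. auto. }
  assert (HJon : mnormal_in o one setT J).
  { intros s h s' _ Hh _ Hss _. unfold J in *. rewrite !HPo, Hh, Ho1r, <- HPo, Hss. exact HP1. }
  assert (HJmn : mnormal_in mul one setT J).
  { intros s h s' _ Hh _ Hss _. unfold J in *. rewrite !(iter_endo _ He), Hh, (g1r Hg),
      <- (iter_endo _ He), Hss. exact HP1. }
  assert (HsubI : forall x, I x -> exists y, x = Nat.iter (n + n) psi y)
    by (intros x Hx; apply FI; [lia|exact Hx]).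
  assert (Dmul : forall s, exists j i, J j /\ I i /\ s = mul j i).
  { intros s. destruct (HsubI (Nat.iter n psi s)) as [y Hy].
    { exists s. split; [exact Logic.I|reflexivity]. }
    rewrite Nat.iter_add in Hy.
    exists (mul s (inv (Nat.iter n psi y))), (Nat.iter n psi y). split; [|split].
    - unfold J. rewrite (iter_endo _ He), (iterV Hg _ He), Hy. apply (gVr Hg).
    - exists y. split; [exact Logic.I|reflexivity].
    - gnorm Hg. reflexivity. }
  assert (Do : forall s, exists j i, J j /\ I i /\ s = o j i).
  { intros s. destruct (HsubI (Nat.iter n psi s)) as [y Hy].
    { exists s. split; [exact Logic.I|reflexivity]. }
    rewrite Nat.iter_add in Hy.
    exists (o s (bar mul inv psi eps (Nat.iter n psi y))), (Nat.iter n psi y). split; [|split].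
    - unfold J. rewrite HPo, HPb, <- Hy. apply Hbr.
    - exists y. split; [exact Logic.I|reflexivity].
    - rewrite Hoa, Hbl, Ho1r. reflexivity. }
  assert (sub2m : forall H, subgroup mul inv one H -> msubgroup mul one H).
  { intros H [H1 [HM HV]]. split; [exact H1|split; [exact HM|]].
    intros x Hx. exists (inv x). split; [auto|split]; [apply (gVr Hg)|apply (gVl Hg)]. }
  assert (HPs : forall x, Nat.iter n psi (psi x) = psi (Nat.iter n psi x)) by apply Nat.iter_swap.
  assert (Hnu : forall a b, (fun x => nu a (nu b x)) = nu (o a b)).
  { intros a b. unfold nu. apply functional_extensionality. intros x. symmetry. apply Hoa. }
  assert (Hnu1 : nu one = (fun x => x)).
  { unfold nu. apply functional_extensionality. apply Ho1l. }
  assert (Hnuinj : forall a b, nu a = nu b -> a = b).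
  { intros a b E. pose proof (f_equal (fun f => f one) E) as E'. unfold nu in E'. simpl in E'.
    rewrite !Ho1r in E'. exact E'. }
  assert (Nsub : forall H : T -> Prop, msubgroup o one H ->
             msubgroup (fun f g : T -> T => fun x => f (g x)) (fun x : T => x) (image nu H)).
  { intros H [H1 [HM HV]]. split; [|split].
    - exists one. split; [exact H1|]. symmetry. exact Hnu1.
    - intros f g [a [Ha ->]] [b [Hb ->]]. exists (o a b). split; [auto|]. apply Hnu.
    - intros f [a [Ha ->]]. destruct (HV a Ha) as [b [Hb [E1 E2]]]. exists (nu b).
      split; [exists b; auto|]. rewrite !Hnu, E1, E2. auto. }
  assert (HoT : msubgroup o one setT).
  { split; [exact Logic.I|split; [intros; exact Logic.I|]].
    intros x _. exists (bar mul inv psi eps x). split; [exact Logic.I|split; auto]. }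
  split; [split; [split; [exact HJsub|exact HJnorm]|split; [exact HJo|exact HJon]]|].
  split; [split; [exact HIsub|exact HIo]|].
  split; [split|].
  { intros x [y [Hy ->]]. unfold J in *. rewrite HPs, Hy. apply (endo1 Hg _ He). }
  { exists n. auto. }
  split; [split; [|split]|].
  { intros x [y [[z [_ ->]] ->]]. exists (psi z). split; [exact Logic.I|]. symmetry. apply HPs. }
  { intros x y Hx Hy E.
    assert (Hd : mul x (inv y) = one).
    { apply TI.
      - unfold J. apply (FJ (S n)); [lia|]. rewrite Nat.iter_succ_r, He, (endoV Hg _ He), E,
          (gVr Hg). exact HP1.
      - destruct HIsub as [_ [HM HV]]. apply HM; auto. }
    pose proof (guniq Hg _ _ Hd) as E2. rewrite <- (ginvK Hg x), <- E2, (ginvK Hg). reflexivity. }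
  { intros x Hx. destruct (FI (S n) x ltac:(lia) Hx) as [y ->].
    exists (Nat.iter n psi y). split; [exists y; split; [exact Logic.I|reflexivity]|]. reflexivity. }
  split; [split|].
  { split; [apply sub2m; split; [exact Logic.I|split; intros; exact Logic.I]|].
    split; [apply sub2m; exact HJsub|]. split; [apply sub2m; exact HIsub|].
    split; [intros x _; exact Logic.I|]. split; [intros x _; exact Logic.I|].
    split; [exact HJmn|]. split; [exact TI|]. intros s _. apply Dmul. }
  { split; [exact HoT|]. split; [exact HJo|]. split; [exact HIo|].
    split; [intros x _; exact Logic.I|]. split; [intros x _; exact Logic.I|].
    split; [exact HJon|]. split; [exact TI|]. intros s _. apply Do. }
  split; [apply Nsub; exact HoT|]. split; [apply Nsub; exact HJo|].
  split; [apply Nsub; exact HIo|].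
  split; [intros f [a [_ ->]]; exists a; split; [exact Logic.I|reflexivity]|].
  split; [intros f [a [_ ->]]; exists a; split; [exact Logic.I|reflexivity]|].
  split.
  { intros f h f' [a [_ ->]] [j [Hj ->]] [b [_ ->]] E _.
    rewrite Hnu in E. rewrite <- Hnu1 in E. apply Hnuinj in E.
    exists (o (o a j) b). split; [|unfold nu; apply functional_extensionality; intro x; rewrite !Hoa; reflexivity].
    unfold J in *. rewrite !HPo, Hj, Ho1r, <- HPo, E. exact HP1. }
  split.
  { intros f [a [Ha ->]] [b [Hb E]]. apply Hnuinj in E. subst b.
    rewrite (TI a Ha Hb). exact Hnu1. }
  intros f [g [_ ->]]. destruct (Do g) as [j [i [Hj [Hi ->]]]].
  exists (nu j), (nu i). split; [exists j; auto|]. split; [exists i; auto|].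
  symmetry. apply Hnu.
Qed.
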